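(* Let $\delta>0$, $n\ge3$, $p\in\mathbb{R}$, let $\varphi_1,\dots,\varphi_{n-1}:[-\delta,\delta]\to\mathbb{R}$ be continuous strictly increasing with $\varphi_j(0)=0$, and $t_1<\dots<t_n$ with $h_j:=t_{j+1}-t_j\le\delta$. Let $H_1,\dots,H_n$ be the associated generalized hat functions, $U_n$ their span, and $s_{i,j}=\langle H_i,H_j\rangle_p$. If $c\in(0,1)$ satisfies $\max_{1\le j\le n-1}\max\{A_{\varphi_j}(h_j),B_{\varphi_j}(h_j)\}\le c$, then $(s_{i,j})$ is row diagonally dominant with factor $c$, and $$\|P^{U_n}\|_{op}\le\max_{t\in[t_1,t_n]}\sum_{j=1}^n|H_j(t)|\cdot\frac{\max_{1\le j\le n-1}\max\{C_{\varphi_j}(h_j),D_{\varphi_j}(h_j)\}}{1-c}.$$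
   Context: $\langle f,g\rangle_p=\int_{t_1}^{t_n}f(t)g(t)e^{pt}\,dt$. $P^{U_n}$ is the $\langle\cdot,\cdot\rangle_p$-orthogonal projection of $C[t_1,t_n]$ onto $U_n$ and $\|P^{U_n}\|_{op}=\sup_{f\neq0}\|P^{U_n}f\|_\infty/\|f\|_\infty$ (sup norm on $[t_1,t_n]$). Row diagonally dominant with factor $c$: $|s_{j-1,j}|+|s_{j,j+1}|\le c\,|s_{j,j}|$ for $j=1,\dots,n$ with $s_{0,1}=s_{n,n+1}=0$. Generalized hat functions: for $2\le j\le n-1$, $H_j(t)=\frac{\varphi_{j-1}(t-t_{j-1})}{\varphi_{j-1}(t_j-t_{j-1})}$ on $[t_{j-1},t_j]$, $H_j(t)=\frac{\varphi_j(t-t_{j+1})}{\varphi_j(t_j-t_{j+1})}$ on $[t_j,t_{j+1}]$, $0$ elsewhere; $H_1=\frac{\varphi_1(t-t_2)}{\varphi_1(t_1-t_2)}$ on $[t_1,t_2]$, $0$ elsewhere; $H_n=\frac{\varphi_{n-1}(t-t_{n-1})}{\varphi_{n-1}(t_n-t_{n-1})}$ on $[t_{n-1},t_n]$, $0$ elsewhere. For $0<h\le\delta$ and $\varphi=\varphi_j$: $A_\varphi(h)=\frac{\varphi(h)}{\varphi(-h)}\frac{\int_0^h\varphi(\tau-h)\varphi(\tau)e^{p\tau}d\tau}{\int_0^h\varphi(\tau)^2e^{p\tau}d\tau}$, $B_\varphi(h)=\frac{\varphi(-h)}{\varphi(h)}\frac{\int_0^h\varphi(\tau-h)\varphi(\tau)e^{p\tau}d\tau}{\int_0^h\varphi(\tau-h)^2e^{p\tau}d\tau}$,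 $C_\varphi(h)=\varphi(h)\frac{\int_0^h\varphi(\tau)e^{p\tau}d\tau}{\int_0^h\varphi(\tau)^2e^{p\tau}d\tau}$, $D_\varphi(h)=\varphi(-h)\frac{\int_0^h\varphi(\tau-h)e^{p\tau}d\tau}{\int_0^h\varphi(\tau-h)^2e^{p\tau}d\tau}$. *)

(* Defs.v *)
From Stdlib Require Import Reals Lra List ClassicalEpsilon.
From Coquelicot Require Import Coquelicot.
Open Scope R_scope.

Definition ip (p a b : R) (f g : R -> R) : R :=
  RInt (fun t => f t * g t * exp (p * t)) a b.

Definition sum1n (n : nat) (F : nat -> R) : R :=
  fold_right Rplus 0 (map F (seq 1 n)).

Definition max1n (m : nat) (F : nat -> R) : R :=
  fold_right Rmax (F 1%nat) (map F (seq 1 m)).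

Definition supnorm (a b : R) (f : R -> R) : R :=
  real (Lub_Rbar (fun y => exists t, a <= t <= b /\ y = Rabs (f t))).

Definition hat (n : nat) (phi : nat -> R -> R) (tt : nat -> R) (j : nat) (t : R) : R :=
  if Nat.eqb j 1 then
    (if Rle_dec (tt 1%nat) t then if Rle_dec t (tt 2%nat) then
       phi 1%nat (t - tt 2%nat) / phi 1%nat (tt 1%nat - tt 2%nat) else 0 else 0)
  else if Nat.eqb j n then
    (if Rle_dec (tt (n-1)%nat) t then if Rle_dec t (tt n) then
       phi (n-1)%nat (t - tt (n-1)%nat) / phi (n-1)%nat (tt n - tt (n-1)%nat) else 0 else 0)
  else
    (if Rle_dec (tt (j-1)%nat) t then
       if Rle_dec t (tt j) then
         phi (j-1)%nat (t - tt (j-1)%nat) / phi (j-1)%nat (tt j - tt (j-1)%nat)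
       else if Rle_dec t (tt (j+1)%nat) then
         phi j (t - tt (j+1)%nat) / phi j (tt j - tt (j+1)%nat)
       else 0
     else 0).

Definition in_span (n : nat) (H : nat -> R -> R) (g : R -> R) : Prop :=
  exists a : nat -> R, forall t, g t = sum1n n (fun j => a j * H j t).

(* <.,.>_p-orthogonal projection of f onto U_n (on [a,b]): the element g of U_n
   with <f - g, H_i>_p = 0 for all i (chosen by description; it exists and is
   unique since the Gram matrix is positive definite). *)
Definition is_orth_proj (p a b : R) (n : nat) (H : nat -> R -> R) (f g : R -> R) : Prop :=
  in_span n H g /\
  forall i, (1 <= i <= n)%nat -> ip p a b (fun t => f t - g t) (H i) = 0.

Definition orth_proj (p a b : R) (n : nat) (H : nat -> R -> R) (f : R -> R) : R -> R :=
  epsilon (inhabits (fun _ : R => 0)) (is_orth_proj p a b n H f).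

Definition cont_on (a b : R) (f : R -> R) : Prop :=
  forall x, a <= x <= b ->
    filterlim f (within (fun y => a <= y <= b) (locally x)) (locally (f x)).

Definition opnorm_proj (p a b : R) (n : nat) (H : nat -> R -> R) : Rbar :=
  Lub_Rbar (fun r => exists f : R -> R,
    cont_on a b f /\ (exists t, a <= t <= b /\ f t <> 0) /\
    r = supnorm a b (orth_proj p a b n H f) / supnorm a b f).

Definition Aphi (p : R) (phi : R -> R) (h : R) : R :=
  phi h / phi (- h) *
  (RInt (fun s => phi (s - h) * phi s * exp (p * s)) 0 h /
   RInt (fun s => phi s ^ 2 * exp (p * s)) 0 h).
Definition Bphi (p : R) (phi : R -> R) (h : R) : R :=
  phi (- h) / phi h *
  (RInt (fun s => phi (s - h) * phi s * exp (p * s)) 0 h /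
   RInt (fun s => phi (s - h) ^ 2 * exp (p * s)) 0 h).
Definition Cphi (p : R) (phi : R -> R) (h : R) : R :=
  phi h *
  (RInt (fun s => phi s * exp (p * s)) 0 h /
   RInt (fun s => phi s ^ 2 * exp (p * s)) 0 h).
Definition Dphi (p : R) (phi : R -> R) (h : R) : R :=
  phi (- h) *
  (RInt (fun s => phi (s - h) * exp (p * s)) 0 h /
   RInt (fun s => phi (s - h) ^ 2 * exp (p * s)) 0 h).

(* row diagonal dominance with factor c of an n x n matrix s (indices 1..n),
   with the convention s_{0,1} = s_{n,n+1} = 0 *)
Definition row_diag_dom (n : nat) (s : nat -> nat -> R) (c : R) : Prop :=
  forall j, (1 <= j <= n)%nat ->
    (if Nat.eqb j 1 then 0 else Rabs (s (j-1)%nat j)) +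
    (if Nat.eqb j n then 0 else Rabs (s j (j+1)%nat)) <= c * Rabs (s j j).

(* Main.v *)
Require Import Defs.
From Stdlib Require Import Reals List.
From Coquelicot Require Import Coquelicot.
From Stdlib Require Import Lra Lia ClassicalEpsilon FunctionalExtensionality.
Open Scope R_scope.


Lemma cont_mult (f g : R -> R) x : continuous f x -> continuous g x -> continuous (fun y => f y * g y) x.
Proof. intros; apply (continuous_mult f g); auto. Qed.
Lemma cont_plus (f g : R -> R) x : continuous f x -> continuous g x -> continuous (fun y => f y + g y) x.
Proof. intros; apply (continuous_plus f g); auto. Qed.
Lemma cont_minus (f g : R -> R) x : continuous f x -> continuous g x -> continuous (fun y => f y - g y) x.
Proof. intros; apply (continuous_minus f g); auto. Qed.
Lemma cont_const (k : R) x : continuous (fun _ : R => k) x.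
Proof. apply continuous_const. Qed.
Lemma cont_id x : continuous (fun y : R => y) x.
Proof. apply continuous_id. Qed.
Lemma cont_exp_lin (p : R) x : continuous (fun t => exp (p * t)) x.
Proof. apply continuous_exp_comp. apply cont_mult; [apply cont_const|apply cont_id]. Qed.
Lemma cont_shift (g : R -> R) (a : R) x : (forall y, continuous g y) -> continuous (fun t => g (t - a)) x.
Proof. intros Hg. apply (continuous_comp (fun t => t - a) g). apply cont_minus; [apply cont_id|apply cont_const]. apply Hg. Qed.

Definition cl (lo hi x : R) := Rmax lo (Rmin hi x).
Lemma cl_id lo hi x : lo <= x <= hi -> cl lo hi x = x.
Proof. intros. unfold cl, Rmax, Rmin. repeat destruct Rle_dec; lra. Qed.
Lemma cl_in lo hi x : lo <= hi -> lo <= cl lo hi x <= hi.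
Proof. intros. unfold cl, Rmax, Rmin. repeat destruct Rle_dec; lra. Qed.
Lemma cl_lip lo hi x y : lo <= hi -> Rabs (cl lo hi x - cl lo hi y) <= Rabs (x - y).
Proof. intros. unfold cl, Rmax, Rmin. repeat destruct Rle_dec; unfold Rabs; repeat destruct Rcase_abs; lra. Qed.

Lemma ball_R x e y : ball x e y <-> Rabs (y - x) < e.
Proof. unfold ball; simpl; unfold AbsRing_ball, abs, minus, plus, opp; simpl. tauto. Qed.

Lemma cont_cl lo hi (f : R -> R) : lo <= hi -> cont_on lo hi f ->
  forall x, continuous (fun y => f (cl lo hi y)) x.
Proof.
  intros Hlh Hf x. unfold continuous.
  apply (filterlim_comp _ _ _ (cl lo hi) f (locally x)
           (within (fun y => lo <= y <= hi) (locally (cl lo hi x)))).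
  - intros P [eps HP]. exists eps. intros y Hy. apply HP.
    + apply ball_R. apply ball_R in Hy. eapply Rle_lt_trans; [apply cl_lip; auto|]. exact Hy.
    + apply cl_in; auto.
  - apply Hf. apply cl_in; auto.
Qed.


Lemma exc (g : R -> R) a b : (forall x, continuous g x) -> ex_RInt g a b.
Proof. intros; apply (@ex_RInt_continuous R_CompleteNormedModule); auto. Qed.

Lemma shift_c (p K a h : R) (g : R -> R) : (forall x, continuous g x) ->
  RInt (fun t => K * g (t - a) * exp (p * t)) a (a + h) =
  K * exp (p * a) * RInt (fun s => g s * exp (p * s)) 0 h.
Proof.
  intros Hg.
  set (f := fun t => K * g (t - a) * exp (p * t)).
  assert (Hf : forall x, continuous f x).
  { intros x; unfold f. apply cont_mult; [apply cont_mult; [apply cont_const|apply cont_shift; auto]|apply cont_exp_lin]. }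
  pose proof (RInt_comp_lin f 1 a 0 h) as E.
  replace (1 * 0 + a) with a in E by ring. replace (1 * h + a) with (a + h) in E by ring.
  rewrite <- E by (apply exc; auto).
  rewrite (RInt_ext _ (fun s => scal (K * exp (p * a)) (g s * exp (p * s)))).
  assert (Hex : ex_RInt (fun s => g s * exp (p * s)) 0 h).
  { apply exc; intro; apply cont_mult; [auto|apply cont_exp_lin]. }
  exact (RInt_scal (V:=R_CompleteNormedModule) _ _ _ _ Hex).
  intros x _. unfold f, scal; simpl; unfold mult; simpl.
  replace (1 * x + a - a) with x by ring. replace (p * (1 * x + a)) with (p * x + p * a) by ring.
  rewrite exp_plus. ring.
Qed.

Lemma ex_piece (F G : R -> R) a b : a < b -> (forall t, a < t < b -> F t = G t) ->
  (forall x, continuous G x) -> ex_RInt F a b.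
Proof.
  intros Hab HFG HG. apply (ex_RInt_ext G). intros x Hx. rewrite Rmin_left in Hx by lra.
  rewrite Rmax_right in Hx by lra. symmetry; auto. apply exc; auto.
Qed.

Lemma RInt_zero_piece (F : R -> R) a b : a < b -> (forall t, a < t < b -> F t = 0) ->
  ex_RInt F a b /\ RInt F a b = 0.
Proof.
  intros Hab HF. split.
  - apply (ex_piece F (fun _ => 0)); auto. intros; apply cont_const.
  - rewrite (RInt_ext F (fun _ => 0)). rewrite RInt_const. unfold scal; simpl; unfold mult; simpl; ring.
    intros x Hx. rewrite Rmin_left in Hx by lra. rewrite Rmax_right in Hx by lra. auto.
Qed.

Lemma RInt_pt (F : R -> R) a : RInt F a a = 0.
Proof. exact (RInt_point (V:=R_CompleteNormedModule) a F). Qed.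
Lemma RInt_Ch (F : R -> R) a b c : ex_RInt F a b -> ex_RInt F b c -> RInt F a b + RInt F b c = RInt F a c.
Proof. intros; exact (RInt_Chasles (V:=R_CompleteNormedModule) F a b c H H0). Qed.

Lemma pw_ex (F : R -> R) (tt : nat -> R) i m : (i <= m)%nat ->
  (forall k, (i <= k < m)%nat -> ex_RInt F (tt k) (tt (S k))) -> ex_RInt F (tt i) (tt m).
Proof.
  induction m; intros Him H.
  - replace i with 0%nat by lia. apply ex_RInt_point.
  - destruct (Nat.eq_dec i (S m)). subst. apply ex_RInt_point.
    apply (ex_RInt_Chasles _ _ (tt m)). apply IHm. lia. intros; apply H; lia. apply H; lia.
Qed.

Lemma pw_zero (F : R -> R) (tt : nat -> R) i m : (i <= m)%nat ->
  (forall k, (i <= k < m)%nat -> tt k < tt (S k)) ->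
  (forall k, (i <= k < m)%nat -> forall t, tt k < t < tt (S k) -> F t = 0) ->
  RInt F (tt i) (tt m) = 0.
Proof.
  induction m; intros Him Ht H.
  - replace i with 0%nat by lia. apply RInt_pt.
  - destruct (Nat.eq_dec i (S m)). subst. apply RInt_pt.
    destruct (RInt_zero_piece F (tt m) (tt (S m))) as [E1 E2]. apply Ht; lia. apply H; lia.
    assert (I1 : RInt F (tt i) (tt m) = 0).
    { apply IHm. lia. intros; apply Ht; lia. intros k Hk; apply H; lia. }
    assert (X1 : ex_RInt F (tt i) (tt m)).
    { apply pw_ex. lia. intros k Hk. exact (proj1 (RInt_zero_piece F _ _ (Ht k ltac:(lia)) (H k ltac:(lia)))). }
    rewrite <- (RInt_Ch _ _ (tt m)) by auto. rewrite I1, E2; apply Rplus_0_r.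
Qed.


Lemma sup_ub a b (f : R -> R) t : (exists U, forall s, a <= s <= b -> Rabs (f s) <= U) ->
  a <= t <= b -> Rabs (f t) <= supnorm a b f.
Proof.
  intros [U HU] Ht. unfold supnorm.
  set (E := fun y => exists t, a <= t <= b /\ y = Rabs (f t)).
  destruct (Lub_Rbar_correct E) as [Hub Hlub].
  assert (HE : E (Rabs (f t))) by (exists t; auto).
  assert (HU' : is_ub_Rbar E U) by (intros y [s [Hs ->]]; simpl; auto).
  specialize (Hub _ HE). specialize (Hlub _ HU').
  destruct (Lub_Rbar E); simpl in *; auto; contradiction.
Qed.

Lemma sup_lub a b (f : R -> R) U : a <= b -> (forall s, a <= s <= b -> Rabs (f s) <= U) ->
  supnorm a b f <= U.
Proof.
  intros Hab HU. unfold supnorm.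
  set (E := fun y => exists t, a <= t <= b /\ y = Rabs (f t)).
  destruct (Lub_Rbar_correct E) as [Hub Hlub].
  assert (HE : E (Rabs (f a))) by (exists a; split; [lra|auto]).
  assert (HU' : is_ub_Rbar E U) by (intros y [s [Hs ->]]; simpl; auto).
  specialize (Hub _ HE). specialize (Hlub _ HU').
  destruct (Lub_Rbar E); simpl in *; auto; contradiction.
Qed.

Lemma sup_nonneg a b (f : R -> R) : a <= b -> (exists U, forall s, a <= s <= b -> Rabs (f s) <= U) ->
  0 <= supnorm a b f.
Proof. intros Hab HB. eapply Rle_trans; [apply Rabs_pos|]. apply (sup_ub a b f a HB). lra. Qed.

Lemma sum1n_S n F : sum1n (S n) F = sum1n n F + F (S n).
Proof.
  unfold sum1n. rewrite seq_S, map_app, fold_right_app. simpl.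
  replace (1 + n)%nat with (S n) by lia.
  generalize (map F (seq 1 n)). intro l. induction l; simpl; [ring|rewrite IHl; ring].
Qed.
Lemma sum1n_0 F : sum1n 0 F = 0.
Proof. reflexivity. Qed.

Lemma sum1n_ext n F G : (forall j, (1 <= j <= n)%nat -> F j = G j) -> sum1n n F = sum1n n G.
Proof. induction n; intros H; [reflexivity|]. rewrite !sum1n_S, IHn, H; auto; try lia. intros; apply H; lia. Qed.
Lemma sum1n_plus n F G : sum1n n (fun j => F j + G j) = sum1n n F + sum1n n G.
Proof. induction n; [simpl; unfold sum1n; simpl; ring|]. rewrite !sum1n_S, IHn; ring. Qed.
Lemma sum1n_le n F G : (forall j, (1 <= j <= n)%nat -> F j <= G j) -> sum1n n F <= sum1n n G.
Proof. induction n; intros H; [unfold sum1n; simpl; lra|]. rewrite !sum1n_S. assert (H1 := H (S n)). assert (sum1n n F <= sum1n n G) by (apply IHn; intros; apply H; lia). specialize (H1 ltac:(lia)). lra. Qed.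
Lemma sum1n_abs n F : Rabs (sum1n n F) <= sum1n n (fun j => Rabs (F j)).
Proof. induction n; [unfold sum1n; simpl; rewrite Rabs_R0; lra|]. rewrite !sum1n_S. eapply Rle_trans; [apply Rabs_triang|]. lra. Qed.
Lemma sum1n_scal n (k : R) F : sum1n n (fun j => k * F j) = k * sum1n n F.
Proof. induction n; [unfold sum1n; simpl; ring|]. rewrite !sum1n_S, IHn; ring. Qed.
Lemma sum1n_mult_r n (k : R) F : sum1n n F * k = sum1n n (fun j => F j * k).
Proof. induction n; [unfold sum1n; simpl; ring|]. rewrite !sum1n_S, <- IHn; ring. Qed.
Lemma sum1n_const n (k : R) : sum1n n (fun _ => k) = INR n * k.
Proof. induction n; [unfold sum1n; simpl; ring|]. rewrite !sum1n_S, IHn, S_INR; ring. Qed.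

Definition ind (k : nat) (x : R) (j : nat) : R := if Nat.eqb j k then x else 0.
Lemma sum1n_ind n k x : sum1n n (ind k x) = if andb (Nat.leb 1 k) (Nat.leb k n) then x else 0.
Proof.
  induction n.
  { destruct (Nat.leb 1 k && Nat.leb k 0)%bool eqn:E; [|reflexivity].
    apply Bool.andb_true_iff in E; destruct E as [E1 E2]; apply Nat.leb_le in E1; apply Nat.leb_le in E2; lia. }
  rewrite sum1n_S, IHn. unfold ind.
  destruct (Nat.eqb (S n) k) eqn:E0; [apply Nat.eqb_eq in E0|apply Nat.eqb_neq in E0];
  destruct (Nat.leb_spec 1 k); destruct (Nat.leb_spec k n); destruct (Nat.leb_spec k (S n)); simpl;
  try lia; ring.
Qed.

Lemma sum1n_tri n i F : (1 <= i <= n)%nat ->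
  (forall j, (1 <= j <= n)%nat -> j <> (i - 1)%nat -> j <> i -> j <> S i -> F j = 0) ->
  sum1n n F = (if Nat.eqb i 1 then 0 else F (i - 1)%nat) + F i + (if Nat.eqb i n then 0 else F (S i)).
Proof.
  intros Hi HF.
  set (x1 := if Nat.eqb i 1 then 0 else F (i - 1)%nat).
  set (x3 := if Nat.eqb i n then 0 else F (S i)).
  rewrite (sum1n_ext n F (fun j => ind (i-1) x1 j + ind i (F i) j + ind (S i) x3 j)).
  rewrite !sum1n_plus, !sum1n_ind.
  unfold x1, x3.
  destruct (Nat.eqb_spec i 1);
  destruct (Nat.eqb_spec i n);
  destruct (Nat.leb_spec 1 (i-1)); destruct (Nat.leb_spec (i-1) n);
  destruct (Nat.leb_spec 1 i); destruct (Nat.leb_spec i n);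
  destruct (Nat.leb_spec 1 (S i)); destruct (Nat.leb_spec (S i) n); simpl;
  try lia; ring.
  intros j Hj. unfold ind, x1, x3.
  destruct (Nat.eqb_spec j (i-1));
  destruct (Nat.eqb_spec j i);
  destruct (Nat.eqb_spec j (S i));
  destruct (Nat.eqb_spec i 1);
  destruct (Nat.eqb_spec i n);
  try lia; subst; try ring; rewrite HF; auto; ring.
Qed.

Lemma max1n_ge m F j : (1 <= j <= m)%nat -> F j <= max1n m F.
Proof.
  intros Hj. unfold max1n. assert (HIn : In j (seq 1 m)) by (apply in_seq; lia).
  generalize dependent (seq 1 m). intros l. induction l; simpl; intros H; [contradiction|].
  destruct H as [->|H]. apply Rmax_l. eapply Rle_trans; [apply IHl; auto|apply Rmax_r].
Qed.

Lemma argmax n (a : nat -> R) : (1 <= n)%nat ->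
  exists j, (1 <= j <= n)%nat /\ forall k, (1 <= k <= n)%nat -> Rabs (a k) <= Rabs (a j).
Proof.
  induction n; intros Hn; [lia|].
  destruct (Nat.eq_dec n 0). subst. exists 1%nat. split; [lia|]. intros k Hk. replace k with 1%nat by lia. lra.
  destruct (IHn ltac:(lia)) as [j [Hj Hm]].
  destruct (Rle_dec (Rabs (a (S n))) (Rabs (a j))).
  - exists j. split; [lia|]. intros k Hk. destruct (Nat.eq_dec k (S n)); [subst; auto|apply Hm; lia].
  - exists (S n). split; [lia|]. intros k Hk. destruct (Nat.eq_dec k (S n)); [subst; lra|].
    specialize (Hm k ltac:(lia)). lra.
Qed.

Lemma RInt_pl (f g : R -> R) a b : ex_RInt f a b -> ex_RInt g a b -> RInt (fun x => f x + g x) a b = RInt f a b + RInt g a b.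
Proof. intros; exact (RInt_plus (V:=R_CompleteNormedModule) f g a b H H0). Qed.
Lemma RInt_mi (f g : R -> R) a b : ex_RInt f a b -> ex_RInt g a b -> RInt (fun x => f x - g x) a b = RInt f a b - RInt g a b.
Proof. intros; exact (RInt_minus (V:=R_CompleteNormedModule) f g a b H H0). Qed.
Lemma RInt_sc (f : R -> R) a b k : ex_RInt f a b -> RInt (fun x => k * f x) a b = k * RInt f a b.
Proof. intros; exact (RInt_scal (V:=R_CompleteNormedModule) f a b k H). Qed.
Lemma ex_pl (f g : R -> R) a b : ex_RInt f a b -> ex_RInt g a b -> ex_RInt (fun x => f x + g x) a b.
Proof. intros; exact (ex_RInt_plus (V:=R_NormedModule) f g a b H H0). Qed.
Lemma ex_mi (f g : R -> R) a b : ex_RInt f a b -> ex_RInt g a b -> ex_RInt (fun x => f x - g x) a b.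
Proof. intros; exact (ex_RInt_minus (V:=R_NormedModule) f g a b H H0). Qed.
Lemma ex_sc (f : R -> R) a b k : ex_RInt f a b -> ex_RInt (fun x => k * f x) a b.
Proof. intros; exact (ex_RInt_scal (V:=R_NormedModule) f a b k H). Qed.

Lemma RInt_sum1n n (F : nat -> R -> R) a b : (forall j, (1 <= j <= n)%nat -> ex_RInt (F j) a b) ->
  ex_RInt (fun t => sum1n n (fun j => F j t)) a b /\
  RInt (fun t => sum1n n (fun j => F j t)) a b = sum1n n (fun j => RInt (F j) a b).
Proof.
  induction n; intros H.
  - unfold sum1n; simpl. split. apply (ex_RInt_ext (fun _ => 0)); auto. apply ex_RInt_const.
    rewrite RInt_const. unfold scal; simpl; unfold mult; simpl; ring.
  - destruct IHn as [X E]. intros; apply H; lia.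
    assert (X2 := H (S n) ltac:(lia)).
    split.
    + apply (ex_RInt_ext (fun t => sum1n n (fun j => F j t) + F (S n) t)). intros; rewrite sum1n_S; auto.
      apply ex_pl; auto.
    + rewrite (RInt_ext _ (fun t => sum1n n (fun j => F j t) + F (S n) t)). rewrite RInt_pl, E, sum1n_S; auto.
      intros; rewrite sum1n_S; auto.
Qed.


Definition trirow (m : nat) (dd e a : nat -> R) (i : nat) : R :=
  (if Nat.eqb i 1 then 0 else e (i-1)%nat * a (i-1)%nat) + dd i * a i +
  (if Nat.eqb i m then 0 else e i * a (S i)).

Lemma tri_solve m : forall (dd e b : nat -> R) (c : R), c < 1 -> (1 <= m)%nat ->
  (forall i, (1 <= i <= m)%nat -> 0 < dd i) ->
  (forall i, (1 <= i <= m)%nat ->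
     (if Nat.eqb i 1 then 0 else Rabs (e (i-1)%nat)) + (if Nat.eqb i m then 0 else Rabs (e i)) <= c * dd i) ->
  exists a, forall i, (1 <= i <= m)%nat -> trirow m dd e a i = b i.
Proof.
  induction m as [|m IH]; intros dd e b c Hc Hm Hpos Hdom; [lia|].
  destruct (Nat.eq_dec m 0) as [->|Hm0].
  { exists (fun _ => b 1%nat / dd 1%nat). intros i Hi. replace i with 1%nat by lia. unfold trirow. simpl.
    assert (0 < dd 1%nat) by (apply Hpos; lia). field. lra. }
  set (d1 := dd 1%nat). set (e1 := e 1%nat). set (q := e1 * e1 / d1).
  assert (Hd1 : 0 < d1) by (apply Hpos; lia).
  assert (Hd2 : 0 < dd 2%nat) by (apply Hpos; lia).
  assert (R1 : Rabs e1 <= c * d1).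
  { pose proof (Hdom 1%nat ltac:(lia)) as H. destruct m; [lia|]. simpl in H. unfold e1, d1. lra. }
  assert (R2 : Rabs e1 + (if Nat.eqb 2 (S m) then 0 else Rabs (e 2%nat)) <= c * dd 2%nat).
  { pose proof (Hdom 2%nat ltac:(lia)) as H. exact H. }
  assert (He2 : 0 <= (if Nat.eqb 2 (S m) then 0 else Rabs (e 2%nat))) by (destruct (Nat.eqb 2 (S m)); [lra|apply Rabs_pos]).
  assert (Hc0 : 0 <= c). { destruct (Rle_dec 0 c) as [|Hn]; auto. apply Rnot_le_lt in Hn. assert (c * d1 < 0) by nra. pose proof (Rabs_pos e1). lra. }
  assert (Hq : q <= c * Rabs e1).
  { assert (qd : q * d1 = Rabs e1 * Rabs e1). { unfold q. rewrite <- Rabs_mult, Rabs_right by nra. field. lra. }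
    pose proof (Rabs_pos e1). nra. }
  assert (Hq0 : 0 <= q). { unfold q. apply Rmult_le_pos. nra. left; apply Rinv_0_lt_compat; lra. }
  assert (Hce : c * Rabs e1 <= Rabs e1) by (pose proof (Rabs_pos e1); nra).
  assert (Hcd : c * dd 2%nat < dd 2%nat) by nra.
  assert (Hcq : c * q <= Rabs e1) by (pose proof (Rabs_pos e1); nra).
  set (dd' := fun i => if Nat.eqb i 1 then dd 2%nat - q else dd (S i)).
  set (e' := fun i => e (S i)).
  set (b' := fun i => if Nat.eqb i 1 then b 2%nat - e1 * b 1%nat / d1 else b (S i)).
  destruct (IH dd' e' b' c Hc ltac:(lia)) as [a' Ha'].
  { intros i Hi. unfold dd'. destruct (Nat.eqb_spec i 1). lra. apply Hpos; lia. }
  { intros i Hi. unfold dd', e'. destruct (Nat.eqb_spec i 1).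
    - subst i. destruct (Nat.eqb_spec 1 m); destruct (Nat.eqb_spec 2 (S m)); try lia; simpl.
      + assert (0 <= c * (dd 2%nat - q)) by (apply Rmult_le_pos; lra). lra.
      + assert (c * (dd 2%nat - q) = c * dd 2%nat - c * q) by ring. lra.
    - assert (H := Hdom (S i) ltac:(lia)).
      destruct (Nat.eqb_spec (S i) 1); [lia|]. replace (S i - 1)%nat with i in H by lia.
      replace (S (i - 1)) with i by lia.
      destruct (Nat.eqb_spec i m); destruct (Nat.eqb_spec (S i) (S m)); try lia; auto. }
  exists (fun i => if Nat.eqb i 1 then (b 1%nat - e1 * a' 1%nat) / d1 else a' (i - 1)%nat).
  intros i Hi. unfold trirow.
  destruct (Nat.eqb_spec i 1).
  - subst i. simpl. destruct m; [lia|]. simpl. fold d1 e1. field. lra.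
  - destruct (Nat.eqb_spec i 2).
    + subst i. simpl. fold e1.
      assert (H := Ha' 1%nat ltac:(lia)). unfold trirow, dd', e', b' in H. simpl in H.
      replace (S m - 0)%nat with (S m) by lia. 
      destruct (Nat.eqb_spec 1 m); destruct (Nat.eqb_spec 2 (S m)); try lia.
      * assert (E : e1 * ((b 1%nat - e1 * a' 1%nat) / d1) = e1 * b 1%nat / d1 - q * a' 1%nat) by (unfold q; field; lra).
        rewrite E. assert ((dd 2%nat - q) * a' 1%nat = dd 2%nat * a' 1%nat - q * a' 1%nat) by ring. lra.
      * assert (E : e1 * ((b 1%nat - e1 * a' 1%nat) / d1) = e1 * b 1%nat / d1 - q * a' 1%nat) by (unfold q; field; lra).
        rewrite E. assert ((dd 2%nat - q) * a' 1%nat = dd 2%nat * a' 1%nat - q * a' 1%nat) by ring. lra.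
    + assert (H := Ha' (i - 1)%nat ltac:(lia)). unfold trirow, dd', e', b' in H.
      destruct (Nat.eqb_spec (i-1) 1); [lia|].
      destruct (Nat.eqb_spec (i - 1 - 1) 1); destruct (Nat.eqb_spec (i - 1) 1); destruct (Nat.eqb_spec (S i) 1); try lia;
      replace (S (i - 1 - 1)) with (i - 1)%nat in H by lia;
      replace (S (i - 1)) with i in H by lia;
      replace (S i - 1)%nat with i by lia;
      replace (i - 1 - 1 + 1)%nat with (i-1)%nat by lia;
      destruct (Nat.eqb_spec (i - 1) m); destruct (Nat.eqb_spec i (S m)); try lia; lra.
Qed.


Section Main.
Variables (delta : R) (n : nat) (p : R) (phi : nat -> R -> R) (tt : nat -> R) (c : R).
Hypothesis Hdelta : 0 < delta.
Hypothesis Hn : (3 <= n)%nat.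
Hypothesis Hphi_cont : forall j, (1 <= j <= n - 1)%nat -> cont_on (- delta) delta (phi j).
Hypothesis Hphi_incr : forall j, (1 <= j <= n - 1)%nat ->
     forall x y, - delta <= x <= delta -> - delta <= y <= delta -> x < y -> phi j x < phi j y.
Hypothesis Hphi0 : forall j, (1 <= j <= n - 1)%nat -> phi j 0 = 0.
Hypothesis Ht : forall j, (1 <= j <= n - 1)%nat -> tt j < tt (S j).
Hypothesis Hh : forall j, (1 <= j <= n - 1)%nat -> tt (S j) - tt j <= delta.

Lemma tt_lt i j : (1 <= i)%nat -> (i < j <= n)%nat -> tt i < tt j.
Proof.
  intros Hi [Hij Hj]. induction j; [lia|].
  destruct (Nat.eq_dec i j). subst. apply Ht; lia.
  apply Rlt_trans with (tt j). apply IHj; lia. apply Ht; lia.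
Qed.
Lemma tt_le i j : (1 <= i)%nat -> (i <= j <= n)%nat -> tt i <= tt j.
Proof. intros. destruct (Nat.eq_dec i j). subst; lra. left; apply tt_lt; lia. Qed.

Lemma phi_mono k x y : (1 <= k <= n - 1)%nat -> - delta <= x <= delta -> - delta <= y <= delta -> x <= y -> phi k x <= phi k y.
Proof. intros. destruct (Req_dec x y). subst; lra. left; apply Hphi_incr; auto; lra. Qed.
Lemma phi_pos k x : (1 <= k <= n - 1)%nat -> 0 < x <= delta -> 0 < phi k x.
Proof. intros. rewrite <- (Hphi0 k) by auto. apply Hphi_incr; auto; lra. Qed.
Lemma phi_neg k x : (1 <= k <= n - 1)%nat -> - delta <= x < 0 -> phi k x < 0.
Proof. intros. rewrite <- (Hphi0 k H). apply Hphi_incr; auto; lra. Qed.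

Definition phc k x := phi k (cl (- delta) delta x).
Definition Lf k t := phc k (t - tt k) / phi k (tt (S k) - tt k).
Definition Rf k t := phc k (t - tt (S k)) / phi k (tt k - tt (S k)).
Definition pH k j t := if Nat.eqb j k then Rf k t else if Nat.eqb j (S k) then Lf k t else 0.

Lemma phc_cont k x : (1 <= k <= n - 1)%nat -> continuous (phc k) x.
Proof. intros. unfold phc. apply (cont_cl (-delta) delta (phi k)). lra. auto. Qed.

Lemma pH_cont k j x : (1 <= k <= n - 1)%nat -> continuous (pH k j) x.
Proof.
  intros Hk. unfold pH. destruct (Nat.eqb j k); [|destruct (Nat.eqb j (S k))].
  - unfold Rf. apply cont_mult; [|apply cont_const]. apply cont_shift. intros; apply phc_cont; auto.
  - unfold Lf. apply cont_mult; [|apply cont_const]. apply cont_shift. intros; apply phc_cont; auto.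
  - apply cont_const.
Qed.

Lemma phc_eq k x : - delta <= x <= delta -> phc k x = phi k x.
Proof. intros. unfold phc. rewrite cl_id; auto. Qed.

Lemma Lf_eq k t : (1 <= k <= n - 1)%nat -> tt k <= t <= tt (S k) ->
  Lf k t = phi k (t - tt k) / phi k (tt (S k) - tt k).
Proof. intros Hk Htk. unfold Lf. rewrite phc_eq; auto. pose proof (Hh k Hk). lra. Qed.
Lemma Rf_eq k t : (1 <= k <= n - 1)%nat -> tt k <= t <= tt (S k) ->
  Rf k t = phi k (t - tt (S k)) / phi k (tt k - tt (S k)).
Proof. intros Hk Htk. unfold Rf. rewrite phc_eq; auto. pose proof (Hh k Hk). lra. Qed.

Lemma div0 x : 0 / x = 0.
Proof. unfold Rdiv; ring. Qed.

Lemma hat_piece k j t : (1 <= k <= n - 1)%nat -> (1 <= j <= n)%nat -> tt k <= t <= tt (S k) ->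
  hat n phi tt j t = pH k j t.
Proof.
  intros Hk Hj Htk. unfold hat, pH.
  destruct (Nat.eqb_spec j 1).
  - subst j. destruct (Nat.eqb_spec 1 k).
    + subst k. rewrite Rf_eq by auto. simpl.
      destruct (Rle_dec (tt 1%nat) t); [|lra]. destruct (Rle_dec t (tt 2%nat)); [|simpl in Htk; lra]. auto.
    + destruct (Nat.eqb_spec 1 (S k)); [lia|].
      destruct (Rle_dec (tt 1%nat) t); auto. destruct (Rle_dec t (tt 2%nat)); auto.
      assert (tt 2%nat <= tt k) by (apply tt_le; lia).
      replace (t - tt 2%nat) with 0 by lra. rewrite Hphi0 by lia. apply div0.
  - destruct (Nat.eqb_spec j n).
    + subst j. destruct (Nat.eqb_spec n k); [lia|]. destruct (Nat.eqb_spec n (S k)).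
      * replace (n - 1)%nat with k by lia. rewrite Lf_eq by auto. rewrite <- e.
        rewrite <- e in Htk.
        destruct (Rle_dec (tt k) t); [|lra]. destruct (Rle_dec t (tt n)); [auto|lra].
      * destruct (Rle_dec (tt (n - 1)%nat) t); auto. destruct (Rle_dec t (tt n)); auto.
        assert (tt (S k) <= tt (n-1)%nat) by (apply tt_le; lia).
        replace (t - tt (n - 1)%nat) with 0 by lra. rewrite Hphi0 by lia. apply div0.
    + destruct (Nat.eqb_spec j k).
      * subst k. rewrite Rf_eq by auto.
        assert (tt (j - 1)%nat < tt j) by (apply tt_lt; lia).
        destruct (Rle_dec (tt (j - 1)%nat) t); [|lra].
        replace (j + 1)%nat with (S j) by lia.
        destruct (Rle_dec t (tt j)).
        -- assert (t = tt j) by lra. subst t.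
           replace (tt j - tt (j - 1)%nat) with (tt (S (j-1)) - tt (j - 1)%nat) by (replace (S (j-1)) with j by lia; auto).
           rewrite Rdiv_diag. rewrite Rdiv_diag. auto.
           apply Rlt_not_eq, phi_neg. lia. pose proof (Ht j ltac:(lia)). pose proof (Hh j ltac:(lia)). lra.
           replace (S (j - 1)) with j by lia. apply Rgt_not_eq, phi_pos. lia.
           pose proof (Hh (j-1)%nat ltac:(lia)). replace (S (j - 1)) with j in * by lia. lra.
        -- destruct (Rle_dec t (tt (S j))); [auto|lra].
      * destruct (Nat.eqb_spec j (S k)).
        -- subst j. rewrite Lf_eq by auto. replace (S k - 1)%nat with k by lia.
           destruct (Rle_dec (tt k) t); [|lra]. destruct (Rle_dec t (tt (S k))); [auto|lra].
        -- destruct (Compare_dec.le_lt_dec k j).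
           ++ (* k < j - 1 *)
              assert (tt (S k) <= tt (j-1)%nat) by (apply tt_le; lia).
              assert (tt (j - 1)%nat < tt j) by (apply tt_lt; lia).
              destruct (Rle_dec (tt (j - 1)%nat) t); auto.
              destruct (Rle_dec t (tt j)); [|lra].
              replace (t - tt (j - 1)%nat) with 0 by lra. rewrite Hphi0 by lia. apply div0.
           ++
              assert (tt (j+1)%nat <= tt k) by (apply tt_le; lia).
              assert (tt j < tt (j+1)%nat) by (apply tt_lt; lia).
              assert (tt (j - 1)%nat < tt j) by (apply tt_lt; lia).
              destruct (Rle_dec (tt (j - 1)%nat) t); [|lra].
              destruct (Rle_dec t (tt j)); [lra|].
              destruct (Rle_dec t (tt (j + 1)%nat)); auto.
              replace (t - tt (j + 1)%nat) with 0 by lra. rewrite Hphi0 by lia. apply div0.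
Qed.

Lemma ratio01 x y : 0 < y -> 0 <= x <= y -> 0 <= x / y <= 1.
Proof. intros. assert (E : x / y * y = x) by (field; lra). split; nra. Qed.
Lemma ratio01n x y : y < 0 -> y <= x <= 0 -> 0 <= x / y <= 1.
Proof. intros. replace (x / y) with ((- x) / (- y)) by (field; lra). apply ratio01; lra. Qed.

Lemma pH_bounds k j t : (1 <= k <= n - 1)%nat -> tt k <= t <= tt (S k) -> 0 <= pH k j t <= 1.
Proof.
  intros Hk Htk. pose proof (Hh k Hk). pose proof (Ht k Hk). unfold pH.
  destruct (Nat.eqb j k); [|destruct (Nat.eqb j (S k))]; [| |lra].
  - rewrite Rf_eq by auto. apply ratio01n. apply phi_neg; auto; lra.
    split; [apply phi_mono; auto; lra|]. destruct (Req_dec t (tt (S k))).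
    subst t. replace (tt (S k) - tt (S k)) with 0 by ring. rewrite Hphi0; auto; lra.
    left; apply phi_neg; auto; lra.
  - rewrite Lf_eq by auto. apply ratio01. apply phi_pos; auto; lra.
    split; [|apply phi_mono; auto; lra]. destruct (Req_dec t (tt k)).
    subst t. replace (tt k - tt k) with 0 by ring. rewrite Hphi0; auto; lra.
    left; apply phi_pos; auto; lra.
Qed.

Lemma in_piece m t : (2 <= m <= n)%nat -> tt 1%nat <= t <= tt m ->
  exists k, (1 <= k <= m - 1)%nat /\ tt k <= t <= tt (S k).
Proof.
  induction m; intros Hm Htm; [lia|].
  destruct (Nat.eq_dec m 1). subst. exists 1%nat. split; [lia|]. auto.
  destruct (Rle_dec t (tt m)).
  - destruct (IHm ltac:(lia)) as [k [Hk Hk2]]. lra. exists k. split; [lia|auto].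
  - exists m. split; [lia|lra].
Qed.

Lemma hat_bounds j t : (1 <= j <= n)%nat -> tt 1%nat <= t <= tt n -> 0 <= hat n phi tt j t <= 1.
Proof.
  intros Hj Htn. destruct (in_piece n t ltac:(lia) Htn) as [k [Hk Hkt]].
  rewrite (hat_piece k) by auto. apply pH_bounds; auto.
Qed.

Definition PW (F : R -> R) := forall k, (1 <= k <= n - 1)%nat ->
  exists G, (forall x, continuous G x) /\ forall t, tt k <= t <= tt (S k) -> F t = G t.

Lemma PW_piece F k : PW F -> (1 <= k <= n - 1)%nat -> ex_RInt F (tt k) (tt (S k)).
Proof.
  intros HF Hk. destruct (HF k Hk) as [G [HG HFG]]. apply (ex_piece F G). apply Ht; auto.
  intros; apply HFG; lra. auto.
Qed.

Lemma PW_ex F i m : PW F -> (1 <= i <= m)%nat -> (m <= n)%nat -> ex_RInt F (tt i) (tt m).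
Proof. intros HF Hi Hm. apply pw_ex. lia. intros k Hk. apply PW_piece; auto; lia. Qed.

Lemma PW_zero F i m : (1 <= i <= m)%nat -> (m <= n)%nat ->
  (forall k, (i <= k < m)%nat -> forall t, tt k < t < tt (S k) -> F t = 0) ->
  RInt F (tt i) (tt m) = 0.
Proof. intros Hi Hm HF. apply pw_zero; auto. lia. intros k Hk. apply Ht; lia. Qed.

Lemma row_split F j : PW F -> (1 <= j <= n)%nat ->
  (forall k, (1 <= k <= n - 1)%nat -> k <> (j - 1)%nat -> k <> j -> forall t, tt k < t < tt (S k) -> F t = 0) ->
  RInt F (tt 1%nat) (tt n) =
  (if Nat.eqb j 1 then 0 else RInt F (tt (j - 1)%nat) (tt j)) +
  (if Nat.eqb j n then 0 else RInt F (tt j) (tt (S j))).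
Proof.
  intros HF Hj HZ.
  destruct (Nat.eqb_spec j 1); [|destruct (Nat.eqb_spec j n)]; cbv beta iota.
  - subst j. destruct (Nat.eqb_spec 1 n); [lia|]. cbv beta iota.
    rewrite <- (RInt_Ch F _ (tt 2%nat)) by (apply PW_ex; auto; lia).
    rewrite (PW_zero F 2 n) by (auto; try lia; intros k Hk; apply HZ; lia). lra.
  - subst j. rewrite <- (RInt_Ch F _ (tt (n-1)%nat)) by (apply PW_ex; auto; lia).
    rewrite (PW_zero F 1 (n-1)) by (auto; try lia; intros k Hk; apply HZ; lia).
    replace (S (n - 1)) with n by lia. lra.
  - rewrite <- (RInt_Ch F _ (tt (j-1)%nat)) by (apply PW_ex; auto; lia).
    rewrite (PW_zero F 1 (j-1)) by (auto; try lia; intros k Hk; apply HZ; lia).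
    rewrite <- (RInt_Ch F _ (tt j)) by (apply PW_ex; auto; lia).
    rewrite <- (RInt_Ch F (tt j) (tt (S j))) by (apply PW_ex; auto; lia).
    rewrite (PW_zero F (S j) n) by (auto; try lia; intros k Hk; apply HZ; lia). lra.
Qed.

Definition h k := tt (S k) - tt k.
Notation HH := (hat n phi tt).

Lemma h_pos k : (1 <= k <= n - 1)%nat -> 0 < h k <= delta.
Proof. intros. unfold h. pose proof (Ht k H). pose proof (Hh k H). lra. Qed.

Lemma piece_comp k (F G Gu : R -> R) (K : R) : (1 <= k <= n - 1)%nat -> (forall x, continuous G x) ->
  (forall t, tt k < t < tt (S k) -> F t = K * G (t - tt k) * exp (p * t)) ->
  (forall s, 0 < s < h k -> G s * exp (p * s) = Gu s) ->
  RInt F (tt k) (tt (S k)) = K * exp (p * tt k) * RInt Gu 0 (h k).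
Proof.
  intros Hk HG HF HGu. pose proof (h_pos k Hk). pose proof (Ht k Hk).
  rewrite (RInt_ext F (fun t => K * G (t - tt k) * exp (p * t))).
  2:{ intros x Hx. rewrite Rmin_left in Hx by lra. rewrite Rmax_right in Hx by lra. auto. }
  replace (tt (S k)) with (tt k + h k) by (unfold h; ring).
  rewrite shift_c by auto. f_equal. apply RInt_ext. intros x Hx.
  rewrite Rmin_left in Hx by lra. rewrite Rmax_right in Hx by lra. auto.
Qed.

Definition ILR k := RInt (fun s => phi k (s - h k) * phi k s * exp (p * s)) 0 (h k).
Definition ILL k := RInt (fun s => phi k s ^ 2 * exp (p * s)) 0 (h k).
Definition IRR k := RInt (fun s => phi k (s - h k) ^ 2 * exp (p * s)) 0 (h k).
Definition IL k := RInt (fun s => phi k s * exp (p * s)) 0 (h k).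
Definition IR k := RInt (fun s => phi k (s - h k) * exp (p * s)) 0 (h k).

Definition Zk k := RInt (fun t => HH k t * HH (S k) t * exp (p * t)) (tt k) (tt (S k)).
Definition YL k := RInt (fun t => HH (S k) t * HH (S k) t * exp (p * t)) (tt k) (tt (S k)).
Definition YR k := RInt (fun t => HH k t * HH k t * exp (p * t)) (tt k) (tt (S k)).
Definition XL k := RInt (fun t => HH (S k) t * exp (p * t)) (tt k) (tt (S k)).
Definition XR k := RInt (fun t => HH k t * exp (p * t)) (tt k) (tt (S k)).

Lemma HH_k k t : (1 <= k <= n - 1)%nat -> tt k <= t <= tt (S k) -> HH k t = Rf k t.
Proof. intros. rewrite (hat_piece k) by (auto; lia). unfold pH. rewrite Nat.eqb_refl. auto. Qed.
Lemma HH_Sk k t : (1 <= k <= n - 1)%nat -> tt k <= t <= tt (S k) -> HH (S k) t = Lf k t.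
Proof. intros. rewrite (hat_piece k) by (auto; lia). unfold pH.
  destruct (Nat.eqb_spec (S k) k); [lia|]. rewrite Nat.eqb_refl. auto. Qed.

Lemma Rf_tau k t : Rf k t = / phi k (- h k) * phc k ((t - tt k) - h k).
Proof. unfold Rf, h. replace (tt k - tt (S k)) with (- (tt (S k) - tt k)) by ring.
  replace (t - tt k - (tt (S k) - tt k)) with (t - tt (S k)) by ring. unfold Rdiv; ring. Qed.
Lemma Lf_tau k t : Lf k t = / phi k (h k) * phc k (t - tt k).
Proof. unfold Lf, h. unfold Rdiv; ring. Qed.

Lemma phc_in k s : 0 <= s <= h k -> (1 <= k <= n - 1)%nat -> phc k s = phi k s /\ phc k (s - h k) = phi k (s - h k).
Proof. intros. pose proof (h_pos k H0). split; apply phc_eq; lra. Qed.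

Lemma Zk_eq k : (1 <= k <= n - 1)%nat -> Zk k = / (phi k (- h k) * phi k (h k)) * exp (p * tt k) * ILR k.
Proof.
  intros Hk. unfold Zk, ILR.
  apply (piece_comp k _ (fun s => phc k (s - h k) * phc k s)); auto.
  - intros x. apply cont_mult; [apply cont_shift|]; intros; apply phc_cont; auto.
  - intros t Ht'. rewrite HH_k, HH_Sk by (auto; lra). rewrite Rf_tau, Lf_tau, Rinv_mult. ring.
  - intros s Hs. destruct (phc_in k s) as [E1 E2]; auto; try lra. rewrite E1, E2. ring.
Qed.
Lemma YL_eq k : (1 <= k <= n - 1)%nat -> YL k = / (phi k (h k) * phi k (h k)) * exp (p * tt k) * ILL k.
Proof.
  intros Hk. unfold YL, ILL.
  apply (piece_comp k _ (fun s => phc k s * phc k s)); auto.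
  - intros x. apply cont_mult; intros; apply phc_cont; auto.
  - intros t Ht'. rewrite HH_Sk by (auto; lra). rewrite Lf_tau, Rinv_mult. ring.
  - intros s Hs. destruct (phc_in k s) as [E1 E2]; auto; try lra. rewrite E1. ring.
Qed.
Lemma YR_eq k : (1 <= k <= n - 1)%nat -> YR k = / (phi k (- h k) * phi k (- h k)) * exp (p * tt k) * IRR k.
Proof.
  intros Hk. unfold YR, IRR.
  apply (piece_comp k _ (fun s => phc k (s - h k) * phc k (s - h k))); auto.
  - intros x. apply cont_mult; apply cont_shift; intros; apply phc_cont; auto.
  - intros t Ht'. rewrite HH_k by (auto; lra). rewrite Rf_tau, Rinv_mult. ring.
  - intros s Hs. destruct (phc_in k s) as [E1 E2]; auto; try lra. rewrite E2. ring.
Qed.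
Lemma XL_eq k : (1 <= k <= n - 1)%nat -> XL k = / phi k (h k) * exp (p * tt k) * IL k.
Proof.
  intros Hk. unfold XL, IL.
  apply (piece_comp k _ (fun s => phc k s)); auto.
  - intros x. apply phc_cont; auto.
  - intros t Ht'. rewrite HH_Sk by (auto; lra). rewrite Lf_tau. ring.
  - intros s Hs. destruct (phc_in k s) as [E1 E2]; auto; try lra. rewrite E1. ring.
Qed.
Lemma XR_eq k : (1 <= k <= n - 1)%nat -> XR k = / phi k (- h k) * exp (p * tt k) * IR k.
Proof.
  intros Hk. unfold XR, IR.
  apply (piece_comp k _ (fun s => phc k (s - h k))); auto.
  - intros x. apply cont_shift; intros; apply phc_cont; auto.
  - intros t Ht'. rewrite HH_k by (auto; lra). rewrite Rf_tau. ring.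
  - intros s Hs. destruct (phc_in k s) as [E1 E2]; auto; try lra. rewrite E2. ring.
Qed.

Lemma clamped_int k (Gu Gc : R -> R) : (1 <= k <= n - 1)%nat -> (forall x, continuous Gc x) ->
  (forall s, 0 < s < h k -> Gu s = Gc s) -> ex_RInt Gu 0 (h k) /\ RInt Gu 0 (h k) = RInt Gc 0 (h k).
Proof.
  intros Hk HG HE. pose proof (h_pos k Hk). split.
  - apply (ex_piece Gu Gc); auto. lra.
  - apply RInt_ext. intros x Hx. rewrite Rmin_left in Hx by lra. rewrite Rmax_right in Hx by lra. auto.
Qed.

Lemma ILL_pos k : (1 <= k <= n - 1)%nat -> 0 < ILL k.
Proof.
  intros Hk. pose proof (h_pos k Hk). unfold ILL.
  destruct (clamped_int k (fun s => phi k s ^ 2 * exp (p * s)) (fun s => phc k s * phc k s * exp (p * s))) as [_ E]; auto.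
  - intros x. apply cont_mult; [apply cont_mult|apply cont_exp_lin]; apply phc_cont; auto.
  - intros s Hs. destruct (phc_in k s) as [E1 _]; auto; try lra. rewrite E1. ring.
  - rewrite E. apply RInt_gt_0. lra.
    + intros x Hx. destruct (phc_in k x) as [E1 _]; auto; try lra. rewrite E1.
      assert (0 < phi k x) by (apply phi_pos; auto; lra). pose proof (exp_pos (p * x)).
      apply Rmult_lt_0_compat; auto. apply Rmult_lt_0_compat; auto.
    + intros x _. apply cont_mult; [apply cont_mult|apply cont_exp_lin]; apply phc_cont; auto.
Qed.

Lemma IRR_pos k : (1 <= k <= n - 1)%nat -> 0 < IRR k.
Proof.
  intros Hk. pose proof (h_pos k Hk). unfold IRR.
  destruct (clamped_int k (fun s => phi k (s - h k) ^ 2 * exp (p * s)) (fun s => phc k (s - h k) * phc k (s - h k) * exp (p * s))) as [_ E]; auto.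
  - intros x. apply cont_mult; [apply cont_mult|apply cont_exp_lin]; apply cont_shift; intros; apply phc_cont; auto.
  - intros s Hs. destruct (phc_in k s) as [_ E1]; auto; try lra. rewrite E1. ring.
  - rewrite E. apply RInt_gt_0. lra.
    + intros x Hx. destruct (phc_in k x) as [_ E1]; auto; try lra. rewrite E1.
      assert (phi k (x - h k) < 0) by (apply phi_neg; auto; lra). pose proof (exp_pos (p * x)).
      apply Rmult_lt_0_compat; auto. nra.
    + intros x _. apply cont_mult; [apply cont_mult|apply cont_exp_lin]; apply cont_shift; intros; apply phc_cont; auto.
Qed.

Lemma ILR_nonpos k : (1 <= k <= n - 1)%nat -> ILR k <= 0.
Proof.
  intros Hk. pose proof (h_pos k Hk). unfold ILR.
  destruct (clamped_int k (fun s => phi k (s - h k) * phi k s * exp (p * s)) (fun s => phc k (s - h k) * phc k s * exp (p * s))) as [X _]; auto.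
  - intros x. apply cont_mult; [apply cont_mult|apply cont_exp_lin]; [apply cont_shift; intros|]; apply phc_cont; auto.
  - intros s Hs. destruct (phc_in k s) as [E1 E2]; auto; try lra. rewrite E1, E2. ring.
  - replace 0 with (RInt (fun _ => 0) 0 (h k)) at 2 by (rewrite RInt_const; unfold scal; simpl; unfold mult; simpl; ring).
    apply RInt_le; auto. lra. apply ex_RInt_const.
    intros x Hx. assert (phi k (x - h k) < 0) by (apply phi_neg; auto; lra).
    assert (0 < phi k x) by (apply phi_pos; auto; lra). pose proof (exp_pos (p * x)).
    assert (phi k (x - h k) * phi k x < 0) by nra. nra.
Qed.

Lemma phih_pos k : (1 <= k <= n - 1)%nat -> 0 < phi k (h k).
Proof. intros. pose proof (h_pos k H). apply phi_pos; auto; lra. Qed.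
Lemma phimh_neg k : (1 <= k <= n - 1)%nat -> phi k (- h k) < 0.
Proof. intros. pose proof (h_pos k H). apply phi_neg; auto; lra. Qed.

Lemma YL_pos k : (1 <= k <= n - 1)%nat -> 0 < YL k.
Proof.
  intros Hk. rewrite YL_eq by auto. pose proof (phih_pos k Hk). pose proof (ILL_pos k Hk).
  pose proof (exp_pos (p * tt k)). apply Rmult_lt_0_compat; auto. apply Rmult_lt_0_compat; auto.
  apply Rinv_0_lt_compat. nra.
Qed.
Lemma YR_pos k : (1 <= k <= n - 1)%nat -> 0 < YR k.
Proof.
  intros Hk. rewrite YR_eq by auto. pose proof (phimh_neg k Hk). pose proof (IRR_pos k Hk).
  pose proof (exp_pos (p * tt k)). apply Rmult_lt_0_compat; auto. apply Rmult_lt_0_compat; auto.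
  apply Rinv_0_lt_compat. nra.
Qed.

Lemma A_YL k : (1 <= k <= n - 1)%nat -> Aphi p (phi k) (h k) * YL k = Zk k.
Proof.
  intros Hk. rewrite YL_eq, Zk_eq by auto. unfold Aphi. fold (ILR k). fold (ILL k).
  pose proof (phih_pos k Hk). pose proof (phimh_neg k Hk). pose proof (ILL_pos k Hk).
  field. repeat split; lra.
Qed.
Lemma B_YR k : (1 <= k <= n - 1)%nat -> Bphi p (phi k) (h k) * YR k = Zk k.
Proof.
  intros Hk. rewrite YR_eq, Zk_eq by auto. unfold Bphi. fold (ILR k). fold (IRR k).
  pose proof (phih_pos k Hk). pose proof (phimh_neg k Hk). pose proof (IRR_pos k Hk).
  field. repeat split; lra.
Qed.
Lemma C_YL k : (1 <= k <= n - 1)%nat -> Cphi p (phi k) (h k) * YL k = XL k.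
Proof.
  intros Hk. rewrite YL_eq, XL_eq by auto. unfold Cphi. fold (IL k). fold (ILL k).
  pose proof (phih_pos k Hk). pose proof (ILL_pos k Hk).
  field. repeat split; lra.
Qed.
Lemma D_YR k : (1 <= k <= n - 1)%nat -> Dphi p (phi k) (h k) * YR k = XR k.
Proof.
  intros Hk. rewrite YR_eq, XR_eq by auto. unfold Dphi. fold (IR k). fold (IRR k).
  pose proof (phimh_neg k Hk). pose proof (IRR_pos k Hk).
  field. repeat split; lra.
Qed.

Lemma A_nonneg k : (1 <= k <= n - 1)%nat -> 0 <= Aphi p (phi k) (h k).
Proof.
  intros Hk. unfold Aphi. fold (ILR k). fold (ILL k).
  pose proof (phih_pos k Hk). pose proof (phimh_neg k Hk). pose proof (ILL_pos k Hk). pose proof (ILR_nonpos k Hk).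
  assert (phi k (h k) / phi k (- h k) < 0).
  { replace (phi k (h k) / phi k (- h k)) with (- (phi k (h k) / - phi k (- h k))) by (field; lra).
    assert (0 < phi k (h k) / - phi k (- h k)) by (apply Rdiv_lt_0_compat; lra). lra. }
  assert (ILR k / ILL k <= 0).
  { replace (ILR k / ILL k) with (- (- ILR k / ILL k)) by (field; lra).
    assert (0 <= - ILR k / ILL k) by (apply Rdiv_le_0_compat; lra). lra. }
  nra.
Qed.
Lemma B_nonneg k : (1 <= k <= n - 1)%nat -> 0 <= Bphi p (phi k) (h k).
Proof.
  intros Hk. unfold Bphi. fold (ILR k). fold (IRR k).
  pose proof (phih_pos k Hk). pose proof (phimh_neg k Hk). pose proof (IRR_pos k Hk). pose proof (ILR_nonpos k Hk).
  assert (phi k (- h k) / phi k (h k) < 0).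
  { replace (phi k (- h k) / phi k (h k)) with (- (- phi k (- h k) / phi k (h k))) by (field; lra).
    assert (0 < - phi k (- h k) / phi k (h k)) by (apply Rdiv_lt_0_compat; lra). lra. }
  assert (ILR k / IRR k <= 0).
  { replace (ILR k / IRR k) with (- (- ILR k / IRR k)) by (field; lra).
    assert (0 <= - ILR k / IRR k) by (apply Rdiv_le_0_compat; lra). lra. }
  nra.
Qed.

Definition sg i j := ip p (tt 1%nat) (tt n) (HH i) (HH j).

Lemma pH_zero k i t : i <> k -> i <> S k -> pH k i t = 0.
Proof. intros. unfold pH. destruct (Nat.eqb_spec i k); [lia|]. destruct (Nat.eqb_spec i (S k)); [lia|]. auto. Qed.

Lemma HH_zero k i t : (1 <= k <= n - 1)%nat -> (1 <= i <= n)%nat -> i <> k -> i <> S k ->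
  tt k <= t <= tt (S k) -> HH i t = 0.
Proof. intros. rewrite (hat_piece k) by auto. apply pH_zero; auto. Qed.

Lemma PW_gram i j : (1 <= i <= n)%nat -> (1 <= j <= n)%nat -> PW (fun t => HH i t * HH j t * exp (p * t)).
Proof.
  intros Hi Hj k Hk. exists (fun t => pH k i t * pH k j t * exp (p * t)). split.
  - intros x. apply cont_mult; [apply cont_mult|apply cont_exp_lin]; apply pH_cont; auto.
  - intros t Htk. rewrite !(hat_piece k) by auto. auto.
Qed.
Lemma PW_He j : (1 <= j <= n)%nat -> PW (fun t => HH j t * exp (p * t)).
Proof.
  intros Hj k Hk. exists (fun t => pH k j t * exp (p * t)). split.
  - intros x. apply cont_mult; [apply pH_cont; auto|apply cont_exp_lin].
  - intros t Htk. rewrite !(hat_piece k) by auto. auto.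
Qed.

Lemma sg_sym i j : sg i j = sg j i.
Proof. unfold sg, ip. apply RInt_ext. intros x _. rewrite (Rmult_comm (HH i x)). reflexivity. Qed.

Lemma sg_far i j : (1 <= i <= n)%nat -> (1 <= j <= n)%nat -> (S i < j)%nat -> sg i j = 0.
Proof.
  intros Hi Hj Hij. unfold sg, ip. apply PW_zero; try lia.
  intros k Hk t Htk. assert (Hk' : (1 <= k <= n - 1)%nat) by lia.
  destruct (Nat.eq_dec i k); destruct (Nat.eq_dec i (S k)); try lia.
  - rewrite (HH_zero k j t) by (auto; try lia; lra). ring.
  - rewrite (HH_zero k j t) by (auto; try lia; lra). ring.
  - rewrite (HH_zero k i t) by (auto; try lia; lra). ring.
Qed.

Lemma sg_off k : (1 <= k <= n - 1)%nat -> sg k (S k) = Zk k.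
Proof.
  intros Hk. unfold sg, ip.
  rewrite (row_split _ (S k)); try lia.
  - destruct (Nat.eqb_spec (S k) 1); [lia|]. replace (S k - 1)%nat with k by lia.
    destruct (Nat.eqb_spec (S k) n). unfold Zk; lra.
    destruct (RInt_zero_piece (fun t => HH k t * HH (S k) t * exp (p * t)) (tt (S k)) (tt (S (S k)))) as [_ E].
    apply Ht; lia. intros t Htk. rewrite (HH_zero (S k) k t) by (auto; try lia; lra). ring.
    rewrite E. unfold Zk; lra.
  - apply PW_gram; lia.
  - intros k' Hk' H1 H2 t Htk. destruct (Nat.eq_dec k (S k')).
    + rewrite (HH_zero k' (S k) t) by (auto; try lia; lra). ring.
    + rewrite (HH_zero k' k t) by (auto; try lia; lra). ring.
Qed.

Lemma sg_diag j : (1 <= j <= n)%nat ->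
  sg j j = (if Nat.eqb j 1 then 0 else YL (j - 1)%nat) + (if Nat.eqb j n then 0 else YR j).
Proof.
  intros Hj. unfold sg, ip. rewrite (row_split _ j); auto.
  - f_equal.
    + destruct (Nat.eqb j 1); auto. unfold YL. replace (S (j - 1)) with j by lia. auto.
  - apply PW_gram; lia.
  - intros k' Hk' H1 H2 t Htk. rewrite (HH_zero k' j t) by (auto; try lia; lra). ring.
Qed.

Lemma He_int j : (1 <= j <= n)%nat ->
  RInt (fun t => HH j t * exp (p * t)) (tt 1%nat) (tt n) =
  (if Nat.eqb j 1 then 0 else XL (j - 1)%nat) + (if Nat.eqb j n then 0 else XR j).
Proof.
  intros Hj. rewrite (row_split _ j); auto.
  - f_equal.
    + destruct (Nat.eqb j 1); auto. unfold XL. replace (S (j - 1)) with j by lia. auto.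
  - apply PW_He; lia.
  - intros k' Hk' H1 H2 t Htk. rewrite (HH_zero k' j t) by (auto; try lia; lra). ring.
Qed.

Hypothesis Hc : 0 < c < 1.
Hypothesis HAB : max1n (n - 1) (fun j => Rmax (Aphi p (phi j) (tt (S j) - tt j))
                                      (Bphi p (phi j) (tt (S j) - tt j))) <= c.

Lemma AB_le k : (1 <= k <= n - 1)%nat -> Aphi p (phi k) (h k) <= c /\ Bphi p (phi k) (h k) <= c.
Proof.
  intros Hk. pose proof (max1n_ge (n - 1) (fun j => Rmax (Aphi p (phi j) (tt (S j) - tt j))
                                      (Bphi p (phi j) (tt (S j) - tt j))) k Hk) as M.
  simpl in M. unfold h. pose proof (Rmax_l (Aphi p (phi k) (tt (S k) - tt k)) (Bphi p (phi k) (tt (S k) - tt k))).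
  pose proof (Rmax_r (Aphi p (phi k) (tt (S k) - tt k)) (Bphi p (phi k) (tt (S k) - tt k))). lra.
Qed.

Lemma Zk_le k : (1 <= k <= n - 1)%nat -> Rabs (Zk k) <= c * YL k /\ Rabs (Zk k) <= c * YR k.
Proof.
  intros Hk. destruct (AB_le k Hk) as [HA HB]. pose proof (A_nonneg k Hk). pose proof (B_nonneg k Hk).
  pose proof (YL_pos k Hk). pose proof (YR_pos k Hk). split.
  - rewrite <- A_YL by auto. rewrite Rabs_right by nra. nra.
  - rewrite <- B_YR by auto. rewrite Rabs_right by nra. nra.
Qed.

Lemma sg_diag_pos j : (1 <= j <= n)%nat -> 0 < sg j j.
Proof.
  intros Hj. rewrite sg_diag by auto.
  destruct (Nat.eqb_spec j 1); destruct (Nat.eqb_spec j n); try lia.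
  - pose proof (YR_pos j ltac:(lia)). lra.
  - pose proof (YL_pos (j-1) ltac:(lia)). lra.
  - pose proof (YR_pos j ltac:(lia)). pose proof (YL_pos (j-1) ltac:(lia)). lra.
Qed.

Lemma sg_prev j : (2 <= j <= n)%nat -> sg (j - 1)%nat j = Zk (j - 1)%nat.
Proof. intros. rewrite <- sg_off by lia. replace (S (j - 1)) with j by lia. auto. Qed.

Lemma part1 : row_diag_dom n sg c.
Proof.
  intros j Hj. rewrite (sg_diag j Hj). replace (j + 1)%nat with (S j) by lia.
  destruct (Nat.eqb_spec j 1); destruct (Nat.eqb_spec j n); try lia.
  - subst j. rewrite sg_off by lia. destruct (Zk_le 1 ltac:(lia)) as [_ Z]. pose proof (YR_pos 1 ltac:(lia)).
    rewrite Rplus_0_l, (Rabs_right (0 + YR 1%nat)); lra.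
  - rewrite sg_prev by lia. destruct (Zk_le (j-1) ltac:(lia)) as [Z _]. pose proof (YL_pos (j-1) ltac:(lia)).
    rewrite Rplus_0_r, (Rabs_right (YL (j - 1)%nat + 0)); lra.
  - rewrite sg_prev, sg_off by lia. destruct (Zk_le (j-1) ltac:(lia)) as [Z _]. destruct (Zk_le j ltac:(lia)) as [_ Z'].
    pose proof (YL_pos (j-1) ltac:(lia)). pose proof (YR_pos j ltac:(lia)).
    rewrite (Rabs_right (_ + _)); lra.
Qed.

Definition bvec (f : R -> R) i := ip p (tt 1%nat) (tt n) f (HH i).

Lemma t1n : tt 1%nat <= tt n.
Proof. apply tt_le; lia. Qed.

Lemma piece_in k t : (1 <= k <= n - 1)%nat -> tt k <= t <= tt (S k) -> tt 1%nat <= t <= tt n.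
Proof. intros. assert (tt 1%nat <= tt k) by (apply tt_le; lia). assert (tt (S k) <= tt n) by (apply tt_le; lia). lra. Qed.

Lemma PW_fHe f i : cont_on (tt 1%nat) (tt n) f -> (1 <= i <= n)%nat -> PW (fun t => f t * HH i t * exp (p * t)).
Proof.
  intros Hf Hi k Hk. exists (fun t => f (cl (tt 1%nat) (tt n) t) * pH k i t * exp (p * t)). split.
  - intros x. apply cont_mult; [apply cont_mult|apply cont_exp_lin]. apply (cont_cl _ _ f t1n Hf). apply pH_cont; auto.
  - intros t Htk. rewrite (hat_piece k) by auto. rewrite cl_id; auto. eapply piece_in; eauto.
Qed.

Lemma ip_lin f a i : cont_on (tt 1%nat) (tt n) f -> (1 <= i <= n)%nat ->
  ip p (tt 1%nat) (tt n) (fun t => f t - sum1n n (fun j => a j * HH j t)) (HH i) =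
  bvec f i - sum1n n (fun j => a j * sg j i).
Proof.
  intros Hf Hi. unfold ip, bvec, sg.
  rewrite (RInt_ext _ (fun t => f t * HH i t * exp (p * t) -
                        sum1n n (fun j => a j * (HH j t * HH i t * exp (p * t))))).
  2:{ intros x _. rewrite Rmult_minus_distr_r, Rmult_minus_distr_r. f_equal.
      rewrite sum1n_mult_r, sum1n_mult_r. apply sum1n_ext. intros; ring. }
  assert (X : forall j, (1 <= j <= n)%nat -> ex_RInt (fun t => a j * (HH j t * HH i t * exp (p * t))) (tt 1%nat) (tt n)).
  { intros j Hj. apply ex_sc. apply PW_ex. apply PW_gram; auto. lia. lia. }
  destruct (RInt_sum1n n (fun j t => a j * (HH j t * HH i t * exp (p * t))) (tt 1%nat) (tt n) X) as [X2 E2].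
  rewrite RInt_mi; auto. rewrite E2. f_equal. apply sum1n_ext. intros j Hj. apply RInt_sc.
  apply PW_ex. apply PW_gram; auto. lia. lia.
  apply PW_ex. apply PW_fHe; auto. lia. lia.
Qed.

Definition dd j := sg j j.
Definition ee j := sg j (S j).

Lemma sum_to_tri a i : (1 <= i <= n)%nat ->
  sum1n n (fun j => a j * sg j i) = trirow n dd ee a i.
Proof.
  intros Hi. rewrite (sum1n_tri n i); auto.
  - unfold trirow, dd, ee.
    destruct (Nat.eqb_spec i 1); destruct (Nat.eqb_spec i n); try replace (S (i - 1)) with i by lia;
    try rewrite (sg_sym (S i) i); ring.
  - intros j Hj H1 H2 H3. destruct (Compare_dec.le_lt_dec j i).
    + rewrite sg_far by lia. ring.
    + rewrite sg_sym, sg_far by lia. ring.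
Qed.

Lemma dom_tri j : (1 <= j <= n)%nat ->
  (if Nat.eqb j 1 then 0 else Rabs (ee (j - 1)%nat)) + (if Nat.eqb j n then 0 else Rabs (ee j)) <= c * dd j.
Proof.
  intros Hj. pose proof (part1 j Hj) as P. unfold ee, dd.
  rewrite (Rabs_right (sg j j)) in P by (left; apply sg_diag_pos; auto).
  replace (j + 1)%nat with (S j) in P by lia.
  destruct (Nat.eqb j 1); auto. replace (S (j - 1)) with j by lia. auto.
Qed.

Lemma proj_exists f : cont_on (tt 1%nat) (tt n) f -> exists g, is_orth_proj p (tt 1%nat) (tt n) n HH f g.
Proof.
  intros Hf.
  assert (Hn1 : (1 <= n)%nat) by lia. assert (Hc1 : c < 1) by lra.
  destruct (tri_solve n dd ee (bvec f) c Hc1 Hn1) as [a Ha].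
  { intros i Hi. unfold dd. apply sg_diag_pos; auto. }
  { apply dom_tri. }
  exists (fun t => sum1n n (fun j => a j * HH j t)). split.
  - exists a. intros; reflexivity.
  - intros i Hi. rewrite (ip_lin f a i Hf Hi). rewrite (sum_to_tri a i Hi), (Ha i Hi). ring.
Qed.

Lemma f_bounded f : cont_on (tt 1%nat) (tt n) f -> exists U, forall s, tt 1%nat <= s <= tt n -> Rabs (f s) <= U.
Proof.
  intros Hf. set (fc := fun t => f (cl (tt 1%nat) (tt n) t)).
  assert (Hc' : forall x, continuity_pt (fun t => Rabs (fc t)) x).
  { intros x. assert (continuity_pt fc x).
    { apply continuity_pt_filterlim. apply (cont_cl _ _ f t1n Hf). }
    apply (continuity_pt_comp fc Rabs x); auto. apply Rcontinuity_abs. }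
  destruct (continuity_ab_maj (fun t => Rabs (fc t)) (tt 1%nat) (tt n) t1n) as [Mx [HM _]].
  { intros; apply Hc'. }
  exists (Rabs (fc Mx)). intros s Hs. specialize (HM s Hs). unfold fc in HM. rewrite cl_id in HM; auto.
Qed.

Definition SH t := sum1n n (fun j => Rabs (HH j t)).

Lemma SH_bounded : exists U, forall s, tt 1%nat <= s <= tt n -> Rabs (SH s) <= U.
Proof.
  exists (INR n * 1). intros s Hs. unfold SH.
  assert (0 <= sum1n n (fun j => Rabs (HH j s))).
  { rewrite <- (Rmult_0_l (INR n)). rewrite Rmult_comm, <- sum1n_const. apply sum1n_le. intros; apply Rabs_pos. }
  rewrite Rabs_right by lra. rewrite <- sum1n_const. apply sum1n_le. intros j Hj.
  destruct (hat_bounds j s Hj Hs). rewrite Rabs_right; lra.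
Qed.

Definition KCD := max1n (n - 1) (fun j => Rmax (Cphi p (phi j) (tt (S j) - tt j)) (Dphi p (phi j) (tt (S j) - tt j))).

Lemma CD_le k : (1 <= k <= n - 1)%nat -> Cphi p (phi k) (h k) <= KCD /\ Dphi p (phi k) (h k) <= KCD.
Proof.
  intros Hk. pose proof (max1n_ge (n - 1) (fun j => Rmax (Cphi p (phi j) (tt (S j) - tt j))
                                      (Dphi p (phi j) (tt (S j) - tt j))) k Hk) as M.
  simpl in M. unfold KCD, h. pose proof (Rmax_l (Cphi p (phi k) (tt (S k) - tt k)) (Dphi p (phi k) (tt (S k) - tt k))).
  pose proof (Rmax_r (Cphi p (phi k) (tt (S k) - tt k)) (Dphi p (phi k) (tt (S k) - tt k))). lra.
Qed.

Lemma He_le j : (1 <= j <= n)%nat -> RInt (fun t => HH j t * exp (p * t)) (tt 1%nat) (tt n) <= KCD * dd j.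
Proof.
  intros Hj. rewrite He_int by auto. unfold dd. rewrite sg_diag by auto.
  destruct (Nat.eqb_spec j 1); destruct (Nat.eqb_spec j n); try lia.
  - rewrite <- D_YR by lia. destruct (CD_le j ltac:(lia)) as [_ HD]. pose proof (YR_pos j ltac:(lia)).
    assert (Dphi p (phi j) (h j) * YR j <= KCD * YR j) by (apply Rmult_le_compat_r; lra). lra.
  - rewrite <- C_YL by lia. destruct (CD_le (j-1) ltac:(lia)) as [HC _]. pose proof (YL_pos (j-1) ltac:(lia)).
    assert (Cphi p (phi (j-1)) (h (j-1)) * YL (j-1)%nat <= KCD * YL (j-1)%nat) by (apply Rmult_le_compat_r; lra). lra.
  - rewrite <- D_YR by lia. destruct (CD_le j ltac:(lia)) as [_ HD]. pose proof (YR_pos j ltac:(lia)).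
    assert (Dphi p (phi j) (h j) * YR j <= KCD * YR j) by (apply Rmult_le_compat_r; lra).
    rewrite <- C_YL by lia. destruct (CD_le (j-1) ltac:(lia)) as [HC _]. pose proof (YL_pos (j-1) ltac:(lia)).
    assert (Cphi p (phi (j-1)) (h (j-1)) * YL (j-1)%nat <= KCD * YL (j-1)%nat) by (apply Rmult_le_compat_r; lra). lra.
Qed.

Lemma b_bound f j : cont_on (tt 1%nat) (tt n) f -> (1 <= j <= n)%nat ->
  Rabs (bvec f j) <= supnorm (tt 1%nat) (tt n) f * RInt (fun t => HH j t * exp (p * t)) (tt 1%nat) (tt n).
Proof.
  intros Hf Hj. set (N := supnorm (tt 1%nat) (tt n) f).
  assert (XHe : ex_RInt (fun t => HH j t * exp (p * t)) (tt 1%nat) (tt n)) by (apply PW_ex; [apply PW_He; auto|lia|lia]).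
  assert (XfHe : ex_RInt (fun t => f t * HH j t * exp (p * t)) (tt 1%nat) (tt n)) by (apply PW_ex; [apply PW_fHe; auto|lia|lia]).
  assert (Hpt : forall t, tt 1%nat < t < tt n ->
     - N * (HH j t * exp (p * t)) <= f t * HH j t * exp (p * t) <= N * (HH j t * exp (p * t))).
  { intros t Ht'. assert (Hfb : Rabs (f t) <= N) by (apply sup_ub; [apply f_bounded; auto|lra]).
    destruct (hat_bounds j t Hj ltac:(lra)). pose proof (exp_pos (p * t)).
    apply Rabs_le_between in Hfb. assert (0 <= HH j t * exp (p * t)) by nra.
    split; nra. }
  unfold bvec, ip. apply Rabs_le. split.
  - replace (- (N * RInt (fun t => HH j t * exp (p * t)) (tt 1%nat) (tt n))) with
      (RInt (fun t => - N * (HH j t * exp (p * t))) (tt 1%nat) (tt n)) by (rewrite RInt_sc; auto; lra).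
    apply RInt_le; auto. apply t1n. apply ex_sc; auto. intros; apply Hpt; auto.
  - rewrite <- RInt_sc by auto. apply RInt_le; auto. apply t1n. apply ex_sc; auto. intros; apply Hpt; auto.
Qed.

Lemma coef_bound f a : cont_on (tt 1%nat) (tt n) f ->
  (forall i, (1 <= i <= n)%nat -> trirow n dd ee a i = bvec f i) ->
  forall k, (1 <= k <= n)%nat -> Rabs (a k) <= supnorm (tt 1%nat) (tt n) f * KCD / (1 - c).
Proof.
  intros Hf Ha. destruct (argmax n a ltac:(lia)) as [j [Hj Hmax]].
  intros k Hk. eapply Rle_trans; [apply Hmax; auto|].
  set (M := Rabs (a j)). set (N := supnorm (tt 1%nat) (tt n) f).
  pose proof (Ha j Hj) as E. unfold trirow in E.
  pose proof (dom_tri j Hj) as D.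
  assert (Hdd : 0 < dd j) by (unfold dd; apply sg_diag_pos; auto).
  assert (T1 : Rabs (if Nat.eqb j 1 then 0 else ee (j - 1)%nat * a (j - 1)%nat) <=
               (if Nat.eqb j 1 then 0 else Rabs (ee (j - 1)%nat)) * M).
  { destruct (Nat.eqb_spec j 1). rewrite Rabs_R0; lra. rewrite Rabs_mult.
    apply Rmult_le_compat_l. apply Rabs_pos. apply Hmax; lia. }
  assert (T3 : Rabs (if Nat.eqb j n then 0 else ee j * a (S j)) <=
               (if Nat.eqb j n then 0 else Rabs (ee j)) * M).
  { destruct (Nat.eqb_spec j n). rewrite Rabs_R0; lra. rewrite Rabs_mult.
    apply Rmult_le_compat_l. apply Rabs_pos. apply Hmax; lia. }
  set (L1 := if Nat.eqb j 1 then 0 else Rabs (ee (j - 1)%nat)) in *.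
  set (L3 := if Nat.eqb j n then 0 else Rabs (ee j)) in *.
  set (X1 := if Nat.eqb j 1 then 0 else ee (j - 1)%nat * a (j - 1)%nat) in *.
  set (X3 := if Nat.eqb j n then 0 else ee j * a (S j)) in *.
  assert (Hb : Rabs (bvec f j) <= N * KCD * dd j).
  { eapply Rle_trans. apply b_bound; auto. rewrite Rmult_assoc. apply Rmult_le_compat_l.
    apply sup_nonneg. apply t1n. apply f_bounded; auto. apply He_le; auto. }
  assert (HM : dd j * M <= Rabs (bvec f j) + (L1 + L3) * M).
  { unfold M. rewrite <- (Rabs_right (dd j)) by lra. rewrite <- Rabs_mult.
    replace (dd j * a j) with (bvec f j - X1 - X3) by lra.
    pose proof (Rabs_triang (bvec f j - X1) (- X3)). pose proof (Rabs_triang (bvec f j) (- X1)).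
    rewrite Rabs_Ropp in *. rewrite Rmult_plus_distr_r. unfold Rminus in *. fold M. lra. }
  assert (HM0 : 0 <= M) by apply Rabs_pos.
  assert (Hc2 : (1 - c) * M * dd j <= N * KCD * dd j).
  { assert ((L1 + L3) * M <= c * dd j * M) by (apply Rmult_le_compat_r; lra). nra. }
  assert (Hc3 : (1 - c) * M <= N * KCD) by (apply Rmult_le_reg_r with (dd j); lra).
  apply (Rmult_le_reg_l (1 - c)). lra.
  replace ((1 - c) * (N * KCD / (1 - c))) with (N * KCD) by (field; lra). lra.
Qed.

Lemma ratio_bound f : cont_on (tt 1%nat) (tt n) f -> (exists t, tt 1%nat <= t <= tt n /\ f t <> 0) ->
  supnorm (tt 1%nat) (tt n) (orth_proj p (tt 1%nat) (tt n) n HH f) / supnorm (tt 1%nat) (tt n) f <=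
  supnorm (tt 1%nat) (tt n) SH * (KCD / (1 - c)).
Proof.
  intros Hf [t0 [Ht0 Hf0]].
  set (g := orth_proj p (tt 1%nat) (tt n) n HH f).
  assert (Hg : is_orth_proj p (tt 1%nat) (tt n) n HH f g).
  { unfold g, orth_proj. apply epsilon_spec. apply proj_exists; auto. }
  destruct Hg as [[a Ha] Horth].
  set (N := supnorm (tt 1%nat) (tt n) f).
  assert (HN : 0 < N).
  { assert (Rabs (f t0) <= N) by (apply sup_ub; [apply f_bounded; auto|auto]).
    pose proof (Rabs_pos_lt _ Hf0). lra. }
  assert (Htri : forall i, (1 <= i <= n)%nat -> trirow n dd ee a i = bvec f i).
  { intros i Hi. specialize (Horth i Hi).
    assert (Eg : (fun t => f t - g t) = (fun t => f t - sum1n n (fun j => a j * HH j t))).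
    { apply functional_extensionality. intros t. rewrite Ha. auto. }
    rewrite Eg, ip_lin in Horth by auto. rewrite sum_to_tri in Horth by auto. lra. }
  pose proof (coef_bound f a Hf Htri) as Hcoef.
  set (Mb := N * KCD / (1 - c)) in *.
  assert (HMb : 0 <= Mb) by (eapply Rle_trans; [apply Rabs_pos|apply (Hcoef 1%nat); lia]).
  set (S := supnorm (tt 1%nat) (tt n) SH).
  assert (HS : 0 <= S) by (apply sup_nonneg; [apply t1n|apply SH_bounded]).
  assert (Hgb : supnorm (tt 1%nat) (tt n) g <= Mb * S).
  { apply sup_lub. apply t1n. intros s Hs. rewrite Ha.
    eapply Rle_trans. apply sum1n_abs.
    eapply Rle_trans with (sum1n n (fun j => Mb * Rabs (HH j s))).
    { apply sum1n_le. intros j Hj. rewrite Rabs_mult. apply Rmult_le_compat_r. apply Rabs_pos. apply Hcoef; auto. }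
    rewrite sum1n_scal. apply Rmult_le_compat_l; auto.
    assert (Rabs (SH s) <= S) by (apply sup_ub; [apply SH_bounded|auto]).
    unfold SH in *. pose proof (Rle_abs (sum1n n (fun j => Rabs (HH j s)))). lra. }
  apply (Rmult_le_reg_r N); auto.
  replace (supnorm (tt 1%nat) (tt n) g / N * N) with (supnorm (tt 1%nat) (tt n) g) by (field; lra).
  replace (S * (KCD / (1 - c)) * N) with (Mb * S) by (unfold Mb; field; lra). auto.
Qed.

Lemma part2 : Rbar_le (opnorm_proj p (tt 1%nat) (tt n) n HH)
    (Finite (supnorm (tt 1%nat) (tt n) (fun t => sum1n n (fun j => Rabs (HH j t))) * (KCD / (1 - c)))).
Proof.
  unfold opnorm_proj. destruct (Lub_Rbar_correct (fun r => exists f : R -> R,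
    cont_on (tt 1%nat) (tt n) f /\ (exists t, tt 1%nat <= t <= tt n /\ f t <> 0) /\
    r = supnorm (tt 1%nat) (tt n) (orth_proj p (tt 1%nat) (tt n) n HH f) / supnorm (tt 1%nat) (tt n) f)) as [_ Hl].
  apply Hl. intros r [f [Hf [Hnz ->]]]. simpl. apply ratio_bound; auto.
Qed.

End Main.

Theorem mainTheorem13
  (delta : R) (n : nat) (p : R) (phi : nat -> R -> R) (tt : nat -> R) (c : R)
  (Hdelta : 0 < delta) (Hn : (3 <= n)%nat)
  (Hphi_cont : forall j, (1 <= j <= n - 1)%nat -> cont_on (- delta) delta (phi j))
  (Hphi_incr : forall j, (1 <= j <= n - 1)%nat ->
     forall x y, - delta <= x <= delta -> - delta <= y <= delta -> x < y ->
       phi j x < phi j y)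
  (Hphi0 : forall j, (1 <= j <= n - 1)%nat -> phi j 0 = 0)
  (Ht : forall j, (1 <= j <= n - 1)%nat -> tt j < tt (S j))
  (Hh : forall j, (1 <= j <= n - 1)%nat -> tt (S j) - tt j <= delta)
  (Hc : 0 < c < 1)
  (HAB : max1n (n - 1) (fun j => Rmax (Aphi p (phi j) (tt (S j) - tt j))
                                      (Bphi p (phi j) (tt (S j) - tt j))) <= c) :
  row_diag_dom n (fun i j => ip p (tt 1%nat) (tt n) (hat n phi tt i) (hat n phi tt j)) c /\
  Rbar_le (opnorm_proj p (tt 1%nat) (tt n) n (hat n phi tt))
    (Finite (supnorm (tt 1%nat) (tt n) (fun t => sum1n n (fun j => Rabs (hat n phi tt j t))) *
             (max1n (n - 1) (fun j => Rmax (Cphi p (phi j) (tt (S j) - tt j))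
                                           (Dphi p (phi j) (tt (S j) - tt j))) / (1 - c)))).
Proof.
  split.
  - eapply part1; eassumption.
  - eapply part2; eassumption.
Qed.
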